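(* Suppose $G_1=G_2=\dots=G_n$. Let $\bar k=\min\{k\in\{1,\dots,n\}: k>\frac{U_1^-}{U_1^++U_1^-}\,n\}$. Then the qualified majority rule $f^{(\bar k)}$ solves program (OPT), i.e., it maximizes $W(f)$ over all SCFs $f$ that are anonymous and BIC. In particular, the maximal expected welfare in (OPT) is attained by an ordinal SCF.
   Context: There are $n\ge 2$ agents $N=\{1,\dots,n\}$ choosing between a Reform $R$ and the Status quo $S$. Agent $i$ gets utility $0$ if $S$ is chosen and utility $v_i\in\mathbb{R}$ if $R$ is chosen. Values are independent random variables $\tilde v_1,\dots,\tilde v_n$, $\tilde v_i\sim G_i$ (Borel probability distributions on $\mathbb{R}$, $G_i(0)=\Pr(\tilde v_i\le 0)$). Standing assumptions: all $\tilde v_i$ have the same support $V$ with $0\notin V$; $\mathbb{E}|\tilde v_i|<\infty$; $p_i:=1-G_i(0)\in(0,1)$. Let $U_i^+=\mathbb{E}(\tilde v_i\mid \tilde v_i>0)$ and $U_i^-=\mathbb{E}(|\tilde v_i|\mid\tilde v_i<0)$ (both positive and finite). An SCF is a Borel measurable $f:V^n\to[0,1]$ (probability of choosing $R$). $f$ is anonymous if $f(v)=f(\pi v)$ for every $v\in V^n$ and every permutation $\pi$ of $N$, where $\pi v=(v_{\pi(1)},\dots,v_{\pi(n)})$. $f$ is BIC if for every $i$ and all $v_i,v_i'\in V$: $v_i\,\mathbb{E}(f(v_i,\tilde v_{-i}))\ge v_i\,\mathbb{E}(f(v_i',\tilde v_{-i}))$ (expectation over $\tilde v_{-i}=(\tilde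 v_j)_{j\neq i}$). Expected welfare is $W(f)=\mathbb{E}\big(f(\tilde v)\sum_{i=1}^n\tilde v_i\big)$. Program (OPT): maximize $W(f)$ subject to $f$ being anonymous and BIC. For $v\in V^n$ let $\chi(v)=\{i\in N: v_i>0\}$. $f$ is ordinal if $f(v)=f(v')$ whenever $\chi(v)=\chi(v')$. For $k\in\{1,\dots,n\}$, the qualified majority rule $f^{(k)}$ is $f^{(k)}(v)=1$ if $|\chi(v)|\ge k$ and $f^{(k)}(v)=0$ otherwise. *)

(* Defs.v *)
From HB Require Import structures.
From mathcomp Require Import all_boot all_order all_algebra all_fingroup.
From mathcomp Require Import all_classical all_reals all_analysis.
Set Implicit Arguments. Unset Strict Implicit. Unset Printing Implicit Defensive.
Import Order.TTheory GRing.Theory Num.Theory.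
Local Open Scope classical_set_scope.
Local Open Scope ring_scope.

Section Defs.
Context {R : realType}.

Definition law_support (mu : probability R R) : set R :=
  [set x | forall e : R, 0 < e ->
    (0 < mu [set y : R | (x - e < y < x + e)%R])%E].

Definition Uplus (mu : probability R R) : R :=
  fine (\int[mu]_(x in [set x : R | 0 < x]) x%:E) / fine (mu [set x : R | 0 < x]).
Definition Uminus (mu : probability R R) : R :=
  fine (\int[mu]_(x in [set x : R | x < 0]) (- x)%:E) / fine (mu [set x : R | x < 0]).

Definition is_kbar (mu : probability R R) (n k : nat) : Prop :=
  [/\ (1 <= k <= n)%N,
      Uminus mu / (Uplus mu + Uminus mu) * n%:R < k%:R
    & forall k' : nat, (1 <= k' <= n)%N ->
        Uminus mu / (Uplus mu + Uminus mu) * n%:R < k'%:R -> (k <= k')%N].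

Definition in_supp_n (mu : probability R R) (n : nat) (v : n.-tuple R) : Prop :=
  forall i : 'I_n, law_support mu (tnth v i).

(* A social choice function: Borel measurable, valued in [0,1]
   (an SCF on V^n, extended to R^n). *)
Definition SCF (n : nat) (f : n.-tuple R -> R) : Prop :=
  measurable_fun setT f /\ forall v, 0 <= f v <= 1.

Definition anonymous (mu : probability R R) (n : nat) (f : n.-tuple R -> R) : Prop :=
  forall (v : n.-tuple R) (pi : 'S_n), in_supp_n mu v ->
    f v = f [tuple tnth v (pi i) | i < n].

Definition ordinal_scf (mu : probability R R) (n : nat) (f : n.-tuple R -> R) : Prop :=
  forall v v' : n.-tuple R, in_supp_n mu v -> in_supp_n mu v' ->
    (forall i, (0 < tnth v i) = (0 < tnth v' i)) -> f v = f v'.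

Definition qmr (n k : nat) (v : n.-tuple R) : R :=
  if (k <= count (fun i : 'I_n => (0 < tnth v i)%R) (enum 'I_n))%N then 1 else 0.

Section Prob.
Context {d : measure_display} {Omega : measurableType d}.
Variable P : probability Omega R.

Definition profile (n : nat) (X : 'I_n -> Omega -> R) (w : Omega) : n.-tuple R :=
  [tuple X i w | i < n].

Definition profile_repl (n : nat) (X : 'I_n -> Omega -> R) (i : 'I_n) (x : R)
    (w : Omega) : n.-tuple R :=
  [tuple if j == i then x else X j w | j < n].

Definition iid (mu : probability R R) (n : nat) (X : 'I_n -> Omega -> R) : Prop :=
  [/\ forall i, measurable_fun setT (X i),
      forall i (B : set R), measurable B -> P (X i @^-1` B) = mu B
    & forall B : 'I_n -> set R, (forall i, measurable (B i)) ->
        P [set w | forall i, B i (X i w)] = (\prod_(i < n) P (X i @^-1` B i))%E].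

Definition interim (n : nat) (X : 'I_n -> Omega -> R) (f : n.-tuple R -> R)
    (i : 'I_n) (x : R) : R :=
  fine (\int[P]_w (f (profile_repl X i x w))%:E).

Definition BIC (mu : probability R R) (n : nat) (X : 'I_n -> Omega -> R)
    (f : n.-tuple R -> R) : Prop :=
  forall (i : 'I_n) (x x' : R), law_support mu x -> law_support mu x' ->
    x * interim X f i x' <= x * interim X f i x.

Definition welfare (n : nat) (X : 'I_n -> Omega -> R) (f : n.-tuple R -> R) : \bar R :=
  \int[P]_w (f (profile X w) * \sum_(i < n) X i w)%:E.

End Prob.
End Defs.

(* Main.v *)
Require Import Defs.
From HB Require Import structures.
From mathcomp Require Import all_boot all_order all_algebra all_fingroup.
From mathcomp Require Import all_classical all_reals all_analysis.
From mathcomp Require Import measurable_realfun.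
From mathcomp Require Import ring lra.
Import Order.TTheory GRing.Theory Num.Theory.
Local Open Scope classical_set_scope.
Local Open Scope ring_scope.
Set Implicit Arguments. Unset Strict Implicit. Unset Printing Implicit Defensive.
Section Key.
Context {R : realType} (n : nat).
Definition cyl (B : 'I_n -> set R) : set (n.-tuple R) := [set v | forall j, B j (tnth v j)].
Definition cyls : set (set (n.-tuple R)) :=
  [set cyl B | B in [set B : 'I_n -> set R | forall j, measurable (B j)]].

Lemma meas_eq : @measurable _ (n.-tuple R) = g_sigma_preimage (fun i (v : n.-tuple R) => tnth v i).
Proof. reflexivity. Qed.

Lemma measurable_cyl B : (forall j, measurable (B j)) -> measurable (cyl B).
Proof.
move=> mB.
have -> : cyl B = \big[setI/setT]_(j < n) ((fun v : n.-tuple R => tnth v j) @^-1` B j).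
  apply/seteqP; split=> v.
    by move=> Hv; rewrite -bigcap_seq => j _; exact: Hv.
  by rewrite -bigcap_seq => Hv j; apply: Hv; exact: mem_index_enum.
apply: bigsetI_measurable => j _.
by rewrite -[_ @^-1` _]setTI; apply: measurable_tnth.
Qed.

Lemma measurable_cyls : @measurable _ (n.-tuple R) = <<s cyls >>.
Proof.
apply/seteqP; split.
- rewrite meas_eq /g_sigma_preimage.
  apply: smallest_sub; first exact: smallest_sigma_algebra.
  move=> A; rewrite -bigcup_seq => -[i _ [B mB <-]].
  apply: sub_sigma_algebra.
  exists (fun j => if j == i then B else setT).
    by move=> j; case: ifP.
  apply/seteqP; split=> v /=.
    by move=> /(_ i); rewrite eqxx.
  by move=> [_ Hv] j; case: ifP => // /eqP ->.
- apply: smallest_sub; first exact: sigma_algebra_measurable.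
  by move=> _ [B mB <-]; exact: measurable_cyl.
Qed.
Lemma setI_closed_cyls : setI_closed cyls.
Proof.
move=> _ _ [B mB <-] [C mC <-]; exists (fun j => B j `&` C j).
  by move=> j; apply: measurableI.
by apply/seteqP; split=> v /=; [move=> H; split=> j; case: (H j)|move=> [H1 H2] j; split].
Qed.

Lemma cyls_setT : cyls setT.
Proof. by exists (fun _ => setT) => //; apply/seteqP; split. Qed.
End Key.

Section Key2.
Context {R : realType} {d : measure_display} {Omega : measurableType d}.
Variable P : probability Omega R.
Variable n : nat.
Variable X : 'I_n -> Omega -> R.
Hypothesis mX : forall i, measurable_fun setT (X i).
Hypothesis indep : forall B : 'I_n -> set R, (forall i, measurable (B i)) ->
        P [set w | forall i, B i (X i w)] = (\prod_(i < n) P (X i @^-1` B i))%E.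

Lemma mprofile : measurable_fun setT (profile X).
Proof.
apply/measurable_fun_tnthP => j.
rewrite (_ : _ \o _ = X j); first exact: mX.
by apply/funext => w /=; rewrite tnth_mktuple.
Qed.

Definition Phi (i : 'I_n) (z : Omega * Omega) : n.-tuple R := profile_repl X i (X i z.1) z.2.

Lemma mPhi i : measurable_fun setT (Phi i).
Proof.
apply/measurable_fun_tnthP => j.
have [->|ji] := eqVneq j i.
  rewrite (_ : _ \o _ = X i \o fst); last by apply/funext => z /=; rewrite tnth_mktuple eqxx.
  by apply: measurableT_comp => //; exact: mX.
rewrite (_ : _ \o _ = X j \o snd); last by apply/funext => z /=; rewrite tnth_mktuple (negbTE ji).
by apply: measurableT_comp => //; exact: mX.
Qed.

Lemma mrepl i x : measurable_fun setT (profile_repl X i x).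
Proof.
apply/measurable_fun_tnthP => j.
have [->|ji] := eqVneq j i.
  rewrite (_ : _ \o _ = cst x); last by apply/funext => z /=; rewrite tnth_mktuple eqxx.
  exact: measurable_cst.
rewrite (_ : _ \o _ = X j); last by apply/funext => z /=; rewrite tnth_mktuple (negbTE ji).
exact: mX.
Qed.

Local Open Scope ereal_scope.

Lemma mpre_prof A : measurable A -> measurable (profile X @^-1` A).
Proof. by move=> mA; rewrite -[_ @^-1` _]setTI; apply: mprofile. Qed.

Lemma prof_cyl B : profile X @^-1` cyl B = [set w | forall j, B j (X j w)].
Proof. by apply/seteqP; split=> w /= H j; move: (H j); rewrite tnth_mktuple. Qed.

Lemma cyl_law i B : (forall j, measurable (B j)) ->
  (P \x P) (Phi i @^-1` cyl B) = P (profile X @^-1` cyl B).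
Proof.
move=> mB.
pose B' : 'I_n -> set R := fun j => if j == i then setT else B j.
have mB' : forall j, measurable (B' j) by move=> j; rewrite /B'; case: ifP.
have -> : Phi i @^-1` cyl B = (X i @^-1` B i) `*` (profile X @^-1` cyl B').
  apply/seteqP; split=> -[w1 w2] /=.
    move=> H; split; first by move: (H i); rewrite tnth_mktuple eqxx.
    move=> j; rewrite tnth_mktuple /B'; case: ifP => // /negbT ji.
    by move: (H j); rewrite tnth_mktuple (negbTE ji).
  move=> [H1 H2] j; rewrite tnth_mktuple; case: ifP => [/eqP ->//|ji].
  by move: (H2 j); rewrite tnth_mktuple /B' ji.
rewrite product_measure1E; last 2 first.
- by rewrite -[_ @^-1` _]setTI; apply: mX.
- by apply: mpre_prof; apply: measurable_cyl.
rewrite !prof_cyl.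
rewrite (indep mB) [X in _ * X = _](_ : _ = \prod_(j < n) P (X j @^-1` B' j)); last exact: (indep mB').
rewrite [RHS](bigD1 i) //= [X in _ * X](bigD1 i) //= {1}/B' eqxx preimage_setT probability_setT mul1e.
congr (_ * _); apply: eq_bigr => j /negbTE ji; by rewrite /B' ji.
Qed.

Lemma law_eq i A : measurable A -> (P \x P) (Phi i @^-1` A) = P (profile X @^-1` A).
Proof.
move=> mA.
pose mix1 := isMeasurableFun.Build _ _ _ _ _ (mPhi i).
pose f1 : {mfun _ >-> n.-tuple R} := HB.pack (Phi i) mix1.
pose mix2 := isMeasurableFun.Build _ _ _ _ _ mprofile.
pose f2 : {mfun _ >-> n.-tuple R} := HB.pack (profile X) mix2.
have := measure_unique (@cyls R n) (fun _ => setT) (@measurable_cyls R n) (@setI_closed_cyls R n)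
  (fun _ => @cyls_setT R n) _ (distribution (P \x P) f1) (distribution P f2) _ _ A mA.
apply.
- by apply/seteqP; split=> // x _; exists 0%N.
- by move=> _ [B mB <-]; exact: cyl_law.
- by move=> _; rewrite /distribution /pushforward /= probability_setT ltry.
Qed.

Lemma key_int (i : 'I_n) (H : n.-tuple R -> \bar R) : measurable_fun [set: n.-tuple R] H -> (forall v, 0 <= H v) ->
  \int[P]_w H (profile X w) = \int[P]_w1 \int[P]_w2 H (profile_repl X i (X i w1) w2).
Proof.
move=> mH H0.
pose mix1 := isMeasurableFun.Build _ _ _ _ _ (mPhi i).
pose f1 : {mfun _ >-> n.-tuple R} := HB.pack (Phi i) mix1.
pose mix2 := isMeasurableFun.Build _ _ _ _ _ mprofile.
pose f2 : {mfun _ >-> n.-tuple R} := HB.pack (profile X) mix2.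
transitivity (\int[distribution P f2]_y H y).
  by rewrite ge0_integral_distribution.
transitivity (\int[distribution (P \x P) f1]_y H y).
  by apply: eq_measure_integral => A mA _; exact/esym/law_eq.
rewrite ge0_integral_distribution //.
rewrite (@fubini_tonelli1 _ _ _ _ _ P P (H \o f1)) //.
by apply: measurableT_comp => //; exact: mPhi.
by move=> z; exact: H0.
Qed.
End Key2.
Section Supp.
Context {R : realType} (mu : probability R R).
Local Open Scope ereal_scope.

Definition ivl (a b : R) : set R := [set y : R | (a < y < b)%R].

Lemma mivl a b : measurable (ivl a b).
Proof.
have -> : ivl a b = `]a, b[%classic by apply/seteqP; split=> y; rewrite /= in_itv.
exact: measurable_itv.
Qed.

Definition Sk (k : nat) : set R :=
  match unpickle k : option (rat * rat) with
  | Some (q1, q2) => if mu (ivl (ratr q1) (ratr q2)) == 0 then ivl (ratr q1) (ratr q2) else set0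
  | None => set0
  end.

Lemma Sk_negl k : mu.-negligible (Sk k).
Proof.
rewrite /Sk; case: (unpickle k) => [[q1 q2]|]; last exact: negligible_set0.
case: ifPn => [/eqP H|_]; last exact: negligible_set0.
by exists (ivl (ratr q1) (ratr q2)); split => //; exact: mivl.
Qed.

Lemma supp_negl : mu.-negligible (~` law_support mu).
Proof.
apply: (negligibleS _ (negligible_bigcup Sk_negl)).
move=> x /= /existsNP [e /not_implyP [e0 /negP]]; rewrite -leNgt => Hle.
have H0 : mu (ivl (x - e) (x + e)) = 0.
  by apply/eqP; rewrite eq_le Hle measure_ge0.
have /rat_in_itvoo [q1] : (x - e < x)%R by rewrite ltrBlDr ltrDl.
rewrite in_itv /= => /andP [h11 h12].
have /rat_in_itvoo [q2] : (x < x + e)%R by rewrite ltrDl.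
rewrite in_itv /= => /andP [h21 h22].
exists (pickle (q1, q2)); first exact: I.
rewrite /Sk pickleK.
have -> : mu (ivl (ratr q1) (ratr q2)) == 0.
  rewrite eq_le measure_ge0 andbT -H0; apply: le_measure; rewrite ?inE; try exact: mivl.
  move=> y /= /andP [y1 y2]; apply/andP; split.
    exact: lt_trans h11 y1.
  exact: lt_trans y2 h22.
by rewrite /ivl /= h12 h21.
Qed.
End Supp.
Section MuSide.
Context {R : realType} (mu : probability R R).
Local Open Scope ereal_scope.

Definition Pos : set R := [set x | (0 < x)%R].
Definition Neg : set R := [set x | (x < 0)%R].
Definition ip (x : R) : R := \1_Pos x.
Definition im (x : R) : R := \1_(~` Pos) x.
Definition gp (x : R) : R := x * ip x.
Definition gm (x : R) : R := - x * im x.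

Lemma mPos : measurable Pos.
Proof.
have -> : Pos = `]0%R, +oo[%classic by apply/seteqP; split=> y; rewrite /= in_itv /= andbT.
exact: measurable_itv.
Qed.

Lemma mNeg : measurable Neg.
Proof.
have -> : Neg = `]-oo, 0%R[%classic by apply/seteqP; split=> y; rewrite /= in_itv /=.
exact: measurable_itv.
Qed.

Lemma mnPos : measurable (~` Pos).
Proof.
have -> : ~` Pos = `]-oo, 0%R]%classic.
  by apply/seteqP; split=> y; rewrite /= in_itv /= leNgt => /negP.
exact: measurable_itv.
Qed.

Lemma m_ip : measurable_fun setT ip.
Proof. exact: measurable_indic mPos. Qed.
Lemma m_im : measurable_fun setT im.
Proof. by apply: measurable_indic; apply: measurableC; exact: mPos. Qed.
Lemma m_gp : measurable_fun setT gp.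
Proof. apply: measurable_funM => //; exact: m_ip. Qed.
Lemma m_gm : measurable_fun setT gm.
Proof. apply: measurable_funM; last exact: m_im. exact: measurable_funN. Qed.

Lemma ipE x : ip x = if (0 < x)%R then 1%R else 0%R.
Proof.
rewrite /ip indicE; case: (boolP (0 < x)%R) => h; first by rewrite mem_set.
by rewrite memNset //; apply/negP.
Qed.
Lemma imE x : im x = if (0 < x)%R then 0%R else 1%R.
Proof.
rewrite /im indicE; case: (boolP (0 < x)%R) => h; first by rewrite memNset.
by rewrite mem_set //; apply/negP.
Qed.

Lemma ip_ge0 x : (0 <= ip x)%R. Proof. by rewrite ipE; case: ifP. Qed.
Lemma im_ge0 x : (0 <= im x)%R. Proof. by rewrite imE; case: ifP. Qed.
Lemma gp_ge0 x : (0 <= gp x)%R.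
Proof. by rewrite /gp ipE; case: ifP => h; rewrite ?mulr1 ?mulr0 // ltW. Qed.
Lemma gm_ge0 x : (0 <= gm x)%R.
Proof. by rewrite /gm imE; case: ifP => h; rewrite ?mulr1 ?mulr0 // oppr_ge0 leNgt h. Qed.
Lemma gpmE x : (gp x - gm x = x)%R.
Proof. by rewrite /gp /gm ipE imE; case: ifP => h; rewrite ?mulr1 ?mulr0 ?subr0 ?sub0r ?mulN1r ?opprK. Qed.
Lemma gp_neq0 x : gp x != 0%R -> (0 < x)%R.
Proof. by rewrite /gp ipE; case: ifP => h; rewrite ?mulr0 ?eqxx. Qed.
Lemma ip_neq0 x : ip x != 0%R -> (0 < x)%R.
Proof. by rewrite ipE; case: ifP => h; rewrite ?eqxx. Qed.
Lemma gm_neq0 x : gm x != 0%R -> (x <= 0)%R.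
Proof. by rewrite /gm imE; case: ifP => h; rewrite ?mulr0 ?eqxx // leNgt h. Qed.
Lemma im_neq0 x : im x != 0%R -> (x <= 0)%R.
Proof. by rewrite imE; case: ifP => h; rewrite ?eqxx // leNgt h. Qed.

Lemma int_ip : \int[mu]_x (ip x)%:E = mu Pos.
Proof. by rewrite integral_indic ?setIT //; exact: mPos. Qed.

Lemma int_gp : \int[mu]_x (gp x)%:E = \int[mu]_(x in Pos) x%:E.
Proof.
rewrite [RHS]integral_mkcond; apply: eq_integral => x _.
rewrite /gp ipE patchE; case: (boolP (x \in Pos)) => [/set_mem h|/negP h].
  by rewrite /Pos /= in h; rewrite h mulr1.
have -> : (0 < x)%R = false by apply/negP => h2; apply: h; exact: mem_set.
by rewrite mulr0.
Qed.

Lemma mu_notPos : ~ law_support mu 0%R -> mu (~` Pos) = mu Neg.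
Proof.
move=> /existsNP [e /not_implyP [e0 /negP]]; rewrite -leNgt => Hle.
apply/eqP; rewrite eq_le; apply/andP; split; last first.
  apply: le_measure; [exact: mem_set mNeg|exact: mem_set (measurableC mPos)|].
  by move=> x /= x0; apply/negP; rewrite -leNgt ltW.
apply: (le_trans (y := mu (Neg `|` ivl (0 - e)%R (0 + e)%R))).
  apply: le_measure; [exact: mem_set (measurableC mPos)|apply: mem_set; apply: measurableU; [exact: mNeg|exact: mivl]|].
  move=> x /= /negP; rewrite -leNgt le_eqVlt => /orP [/eqP ->|x0]; last by left.
  by right; rewrite /ivl /= sub0r add0r oppr_lt0 e0.
apply: (le_trans (measureU2 _ mNeg (mivl _ _))).
by rewrite -[leRHS]adde0; apply: leeD.
Qed.

Lemma int_im : ~ law_support mu 0%R -> \int[mu]_x (im x)%:E = mu Neg.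
Proof.
move=> n0; rewrite integral_indic ?setIT; [exact: mu_notPos|exact: measurableT|exact: mnPos].
Qed.

Lemma int_gm : \int[mu]_x (gm x)%:E = \int[mu]_(x in Neg) (- x)%:E.
Proof.
rewrite [RHS]integral_mkcond; apply: eq_integral => x _.
rewrite /gm imE patchE; case: (boolP (x \in Neg)) => [/set_mem h|/negP h].
  by rewrite /Neg /= in h; rewrite ltNge (ltW h) /= mulr1.
have : ~~ (x < 0)%R by apply/negP => h2; apply: h; exact: mem_set.
rewrite -leNgt le_eqVlt => /orP [/eqP <-|h3]; first by rewrite ltxx mulr1 oppr0.
by rewrite h3 mulr0.
Qed.
End MuSide.
Section Main.
Context {R : realType} {d : measure_display} {Omega : measurableType d}.
Variables (P : probability Omega R) (mu : probability R R) (n : nat) (X : 'I_n -> Omega -> R).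
Hypothesis hiid : iid P mu X.
Local Open Scope ereal_scope.

Lemma mX : forall i, measurable_fun setT (X i). Proof. by case: hiid. Qed.
Lemma lawX i B : measurable B -> P (X i @^-1` B) = mu B.
Proof. by case: hiid => _ H _; apply: H. Qed.
Lemma indepX : forall B : 'I_n -> set R, (forall i, measurable (B i)) ->
        P [set w | forall i, B i (X i w)] = (\prod_(i < n) P (X i @^-1` B i))%E.
Proof. by case: hiid. Qed.

Definition Ie (F : n.-tuple R -> R) (i : 'I_n) (x : R) : \bar R :=
  \int[P]_w (F (profile_repl X i x w))%:E.

Lemma mFrepl F i x : SCF F -> measurable_fun setT (fun w => (F (profile_repl X i x w))%:E).
Proof.
move=> [mF _]; apply/measurable_EFinP.
exact: (measurableT_comp mF (mrepl mX i x)).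
Qed.

Lemma Ie_ge0 F i x : SCF F -> 0 <= Ie F i x.
Proof.
move=> [_ HF]; apply: integral_ge0 => w _; rewrite lee_fin.
by case/andP: (HF (profile_repl X i x w)).
Qed.

Lemma Ie_le1 F i x : SCF F -> Ie F i x <= 1.
Proof.
move=> HF; apply: (@le_trans _ _ (\int[P]_w (cst 1 w))).
  apply: ge0_le_integral => //.
  - by move=> w _; rewrite lee_fin; case/andP: (HF.2 (profile_repl X i x w)).
  - exact: mFrepl.
  - by move=> w _; rewrite lee_fin; case/andP: (HF.2 (profile_repl X i x w)).
by rewrite integral_cst //= probability_setT mul1e.
Qed.

Lemma Ie_fin F i x : SCF F -> Ie F i x = (interim P X F i x)%:E.
Proof.
move=> HF; rewrite /interim -/(Ie F i x) fineK //.
by rewrite ge0_fin_numE ?Ie_ge0 // (le_lt_trans (Ie_le1 _ _ HF)) // ltry.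
Qed.

Lemma step1 F i (g : R -> R) : SCF F -> measurable_fun setT g -> (forall x, 0 <= g x)%R ->
  \int[P]_w (g (X i w) * F (profile X w))%:E = \int[P]_w ((g (X i w))%:E * Ie F i (X i w)).
Proof.
move=> HF mg g0.
pose H := fun v : n.-tuple R => (g (tnth v i) * F v)%:E.
transitivity (\int[P]_w H (profile X w)).
  by apply: eq_integral => w _; rewrite /H tnth_mktuple.
rewrite (key_int mX indepX i (H := H)).
- apply: eq_integral => w _.
  rewrite /Ie -ge0_integralZl_EFin //; last exact: mFrepl.
    by apply: eq_integral => w2 _; rewrite /H tnth_mktuple eqxx EFinM.
  by move=> w2 _; rewrite lee_fin; case/andP: (HF.2 (profile_repl X i (X i w) w2)).
- apply/measurable_EFinP; apply: measurable_funM; last exact: HF.1.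
  exact: (measurableT_comp mg (measurable_tnth i)).
- move=> v; rewrite /H lee_fin; apply: mulr_ge0 => //.
  by case/andP: (HF.2 v).
Qed.

Lemma mIeX F i : SCF F -> measurable_fun setT (fun w => Ie F i (X i w)).
Proof.
move=> HF.
have m1 : measurable_fun setT (fun z => (F (Phi X i z))%:E).
  apply/measurable_EFinP; exact: (measurableT_comp HF.1 (mPhi mX i)).
have f0 : forall z, 0 <= (fun z => (F (Phi X i z))%:E) z.
  by move=> z; rewrite lee_fin; case/andP: (HF.2 (Phi X i z)).
exact: (@measurable_fun_fubini_tonelli_F _ _ _ _ _ P _ m1 f0).
Qed.

Lemma negl_X i : P.-negligible (X i @^-1` ~` law_support mu).
Proof.
have [N [mN N0 sub]] := supp_negl mu.
exists (X i @^-1` N); split.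
- by rewrite -[_ @^-1` _]setTI; exact: mX.
- by rewrite lawX.
- by move=> w /sub.
Qed.

Lemma step2 F i (g : R -> R) (c : R) : SCF F -> measurable_fun setT g -> (forall x, 0 <= g x)%R ->
  (0 <= c)%R ->
  (forall x, law_support mu x -> g x != 0%R -> Ie F i x = c%:E) ->
  \int[P]_w ((g (X i w))%:E * Ie F i (X i w)) = c%:E * \int[P]_w (g (X i w))%:E.
Proof.
move=> HF mg g0 c0 Hc.
have mgX : measurable_fun setT (fun w => (g (X i w))%:E).
  exact/measurable_EFinP/(measurableT_comp mg (mX i)).
rewrite -ge0_integralZl_EFin //; last by move=> w _; rewrite lee_fin.
apply: ge0_ae_eq_integral => //.
- apply: emeasurable_funM => //; exact: mIeX.
- exact: measurable_funeM.
- by move=> w _; apply: mule_ge0; [rewrite lee_fin|exact: Ie_ge0].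
- by move=> w _; apply: mule_ge0; rewrite lee_fin.
- apply: (negligibleS _ (negl_X i)) => w /= Hw HS; apply: Hw => _.
  have [->|gn0] := eqVneq (g (X i w)) 0%R; first by rewrite mul0e mule0.
  by rewrite (Hc _ HS gn0) muleC.
Qed.

Lemma step3 i (g : R -> R) : measurable_fun setT g -> (forall x, 0 <= g x)%R ->
  \int[P]_w (g (X i w))%:E = \int[mu]_x (g x)%:E.
Proof.
move=> mg g0.
pose Xi : {mfun Omega >-> R} := HB.pack (X i) (isMeasurableFun.Build _ _ _ _ _ (mX i)).
transitivity (\int[distribution P Xi]_x (g x)%:E).
  rewrite ge0_integral_distribution //.
  exact/measurable_EFinP.
apply: eq_measure_integral => A mA _.
exact: lawX.
Qed.

Lemma gen_i F i (g : R -> R) (c : R) : SCF F -> measurable_fun setT g -> (forall x, 0 <= g x)%R ->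
  (0 <= c)%R ->
  (forall x, law_support mu x -> g x != 0%R -> Ie F i x = c%:E) ->
  \int[P]_w (g (X i w) * F (profile X w))%:E = c%:E * \int[mu]_x (g x)%:E.
Proof.
move=> HF mg g0 c0 Hc.
by rewrite step1 // (step2 (c := c)) // step3.
Qed.

Lemma class_const F i (Q : R -> Prop) : SCF F ->
  (forall x y, law_support mu x -> law_support mu y -> Q x -> Q y ->
     interim P X F i x = interim P X F i y) ->
  exists c : R, (0 <= c)%R /\ forall x, law_support mu x -> Q x -> Ie F i x = c%:E.
Proof.
move=> HF Hconst.
case: (pselect (exists x0, law_support mu x0 /\ Q x0)) => [[x0 [S0 Q0]]|N].
  exists (interim P X F i x0); split.
    by rewrite -lee_fin -Ie_fin //; exact: Ie_ge0.
  by move=> x Sx Qx; rewrite Ie_fin // (Hconst x x0).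
exists 0%R; split => // x Sx Qx; exfalso; apply: N; by exists x.
Qed.

Lemma bic_pos F (i : 'I_n) : BIC P mu X F -> forall x y, law_support mu x -> law_support mu y ->
  (0 < x)%R -> (0 < y)%R -> interim P X F i x = interim P X F i y.
Proof.
move=> HB x y Sx Sy x0 y0.
have h1 := HB i x y Sx Sy; have h2 := HB i y x Sy Sx.
rewrite ler_pM2l // in h1; rewrite ler_pM2l // in h2.
by apply/eqP; rewrite eq_le h1 h2.
Qed.

Lemma bic_neg F (i : 'I_n) : BIC P mu X F -> ~ law_support mu 0%R -> forall x y, law_support mu x -> law_support mu y ->
  (x <= 0)%R -> (y <= 0)%R -> interim P X F i x = interim P X F i y.
Proof.
move=> HB n0 x y Sx Sy x0 y0.
have x0' : (x < 0)%R by rewrite lt_neqAle x0 andbT; apply/eqP => e; apply: n0; rewrite -e.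
have y0' : (y < 0)%R by rewrite lt_neqAle y0 andbT; apply/eqP => e; apply: n0; rewrite -e.
have h1 := HB i x y Sx Sy; have h2 := HB i y x Sy Sx.
rewrite ler_nM2l // in h1; rewrite ler_nM2l // in h2.
by apply/eqP; rewrite eq_le h1 h2.
Qed.

End Main.
Section Main2.
Context {R : realType} {d : measure_display} {Omega : measurableType d}.
Variables (P : probability Omega R) (mu : probability R R) (n : nat) (X : 'I_n -> Omega -> R).
Hypothesis hiid : iid P mu X.
Local Open Scope ereal_scope.

Lemma per_i F i : SCF F -> BIC P mu X F -> ~ law_support mu 0%R ->
 exists a b : R, ((0 <= a)%R /\ (0 <= b)%R) /\ [/\
   \int[P]_w (gp (X i w) * F (profile X w))%:E = a%:E * \int[mu]_(x in Pos) x%:E,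
   \int[P]_w (ip (X i w) * F (profile X w))%:E = a%:E * mu Pos,
   \int[P]_w (gm (X i w) * F (profile X w))%:E = b%:E * \int[mu]_(x in Neg) (-x)%:E &
   \int[P]_w (im (X i w) * F (profile X w))%:E = b%:E * mu Neg].
Proof.
move=> HF HB n0.
have [a [a0 Ha]] := class_const hiid (i := i) (Q := fun x => 0 < x)%R HF (bic_pos i HB).
have [b [b0 Hb]] := class_const hiid (i := i) (Q := fun x => x <= 0)%R HF (bic_neg i HB n0).
exists a, b; split => //; split.
- rewrite (gen_i hiid (i := i) HF m_gp gp_ge0 a0) ?int_gp //.
  by move=> x Sx /gp_neq0; exact: Ha.
- rewrite (gen_i hiid (i := i) HF m_ip ip_ge0 a0) ?int_ip //.
  by move=> x Sx /ip_neq0; exact: Ha.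
- rewrite (gen_i hiid (i := i) HF m_gm gm_ge0 b0) ?int_gm //.
  by move=> x Sx /gm_neq0; exact: Hb.
- rewrite (gen_i hiid (i := i) HF m_im im_ge0 b0) ?int_im //.
  by move=> x Sx /im_neq0; exact: Hb.
Qed.
End Main2.
Section Qmr.
Context {R : realType} (n k : nat).

Lemma count_sumR (v : n.-tuple R) :
  (count (fun i : 'I_n => 0 < tnth v i) (enum 'I_n))%:R = \sum_(i < n) ip (tnth v i).
Proof.
rewrite -sum1_count big_enum_cond /= natr_sum big_mkcond /=.
by apply: eq_bigr => i _; rewrite ipE; case: ifP.
Qed.

Lemma qmrE (v : n.-tuple R) : @qmr R n k v = if (k%:R <= \sum_(i < n) ip (tnth v i)) then 1 else 0.
Proof. by rewrite /qmr -count_sumR ler_nat. Qed.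

Lemma m_qmr : measurable_fun setT (@qmr R n k).
Proof.
have -> : @qmr R n k = (fun r : R => \1_[set r : R | k%:R <= r] r) \o (fun v => \sum_(i < n) ip (tnth v i)).
  apply/funext => v /=; rewrite qmrE indicE; case: ifP => h.
    by rewrite mem_set.
  by rewrite memNset //= h.
apply: measurableT_comp.
  apply: measurable_indic.
  have -> : [set r : R | k%:R <= r] = `[k%:R, +oo[%classic.
    by apply/seteqP; split=> y; rewrite /= in_itv /= andbT.
  exact: measurable_itv.
apply: measurable_sum => i.
exact: (measurableT_comp m_ip (measurable_tnth i)).
Qed.

Lemma qmr01 v : 0 <= @qmr R n k v <= 1.
Proof. by rewrite /qmr; case: ifP => _; rewrite ?ler01 ?lexx. Qed.

Lemma SCF_qmr : SCF (@qmr R n k).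
Proof. by split; [exact: m_qmr|exact: qmr01]. Qed.

Lemma anon_qmr mu : anonymous mu (@qmr R n k).
Proof.
move=> v pi _; rewrite !qmrE.
congr (if _ <= _ then _ else _).
under [RHS]eq_bigr => i _ do rewrite tnth_mktuple.
exact: (reindex_inj (@perm_inj _ pi)).
Qed.

Lemma ord_qmr mu : ordinal_scf mu (@qmr R n k).
Proof.
move=> v v' _ _ H; rewrite /qmr.
by rewrite (eq_count (a2 := fun i => 0 < tnth v' i)).
Qed.
End Qmr.

Section QmrBIC.
Context {R : realType} {d : measure_display} {Omega : measurableType d}.
Variables (P : probability Omega R) (mu : probability R R) (n k : nat) (X : 'I_n -> Omega -> R).
Hypothesis hiid : iid P mu X.

Lemma ip_le1 (x : R) : ip x <= 1. Proof. by rewrite ipE; case: ifP. Qed.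

Lemma qmr_mono i (x x' : R) w : ip x' <= ip x ->
  @qmr R n k (profile_repl X i x' w) <= @qmr R n k (profile_repl X i x w).
Proof.
move=> hx; rewrite !qmrE.
have hs : \sum_(j < n) ip (tnth (profile_repl X i x' w) j) <= \sum_(j < n) ip (tnth (profile_repl X i x w) j).
  apply: ler_sum => j _; rewrite !tnth_mktuple; case: ifP => //.
case: ifP => h1; case: ifP => h2 //.
by rewrite (le_trans h1 hs) in h2.
Qed.

Lemma interim_mono i (x x' : R) : (forall w, @qmr R n k (profile_repl X i x' w) <= @qmr R n k (profile_repl X i x w)) ->
  interim P X (@qmr R n k) i x' <= interim P X (@qmr R n k) i x.
Proof.
move=> H; rewrite -lee_fin -!(Ie_fin hiid) //; try exact: SCF_qmr.
apply: ge0_le_integral => //.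
- by move=> w _; rewrite lee_fin; case/andP: (qmr01 k (profile_repl X i x' w)).
- exact: (mFrepl hiid _ _ (SCF_qmr n k)).
- exact: (mFrepl hiid _ _ (SCF_qmr n k)).
- by move=> w _; rewrite lee_fin.
Qed.

Lemma BIC_qmr : BIC P mu X (@qmr R n k).
Proof.
move=> i x x' _ _.
case: (ltrgtP x 0) => hx.
- rewrite ler_nM2l //; apply: interim_mono => w; apply: qmr_mono.
  by rewrite (ipE x) ltNge (ltW hx) /= ip_ge0.
- rewrite ler_pM2l //; apply: interim_mono => w; apply: qmr_mono.
  by rewrite (ipE x) hx ip_le1.
- by rewrite hx !mul0r.
Qed.
End QmrBIC.
Section Lin.
Context {R : realType} {d : measure_display} {Omega : measurableType d}.
Variables (P : probability Omega R) (n : nat).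
Local Open Scope ereal_scope.

Lemma fin_integrable (f : Omega -> R) (c : R) : measurable_fun setT f -> (forall w, 0 <= f w)%R ->
  \int[P]_w (f w)%:E = c%:E -> P.-integrable setT (EFin \o f).
Proof.
move=> mf f0 fc; apply/integrableP; split; first exact/measurable_EFinP.
rewrite (eq_integral (fun w => (f w)%:E)); first by rewrite fc ltry.
by move=> w _ /=; rewrite ger0_norm.
Qed.

Lemma int_lin (u v : 'I_n -> Omega -> R) (al be : 'I_n -> R) :
 (forall i, P.-integrable setT (EFin \o u i)) -> (forall i, P.-integrable setT (EFin \o v i)) ->
 (forall i, \int[P]_w (u i w)%:E = (al i)%:E) -> (forall i, \int[P]_w (v i w)%:E = (be i)%:E) ->
 P.-integrable setT (fun w => (\sum_(i < n) (u i w - v i w))%:E) /\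
 \int[P]_w (\sum_(i < n) (u i w - v i w))%:E = (\sum_(i < n) (al i - be i))%:E.
Proof.
move=> iu iv Hu Hv.
have iuv : forall i, P.-integrable setT (fun w => (u i w - v i w)%:E).
  move=> i; apply: (eq_integrable measurableT _ _ _ (integrableB measurableT (iu i) (iv i))) => w _.
  by rewrite /= EFinB.
have E : (fun w => (\sum_(i < n) (u i w - v i w))%:E) = (fun w => \sum_(i < n) (u i w - v i w)%:E).
  by apply/funext => w; rewrite sumEFin.
rewrite E; split; first exact: integrable_sum.
rewrite integral_sum // -sumEFin; apply: eq_bigr => i _.
by rewrite (eq_integral (fun w => (u i w)%:E - (v i w)%:E)) ?integralB_EFin ?Hu ?Hv // => w _; rewrite EFinB.
Qed.
End Lin.

Section Final.
Context {R : realType} {d : measure_display} {Omega : measurableType d}.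
Variables (P : probability Omega R) (mu : probability R R) (n : nat) (X : 'I_n -> Omega -> R).
Hypothesis hiid : iid P mu X.
Hypothesis n0 : ~ law_support mu 0%R.
Hypothesis hint : mu.-integrable setT (fun x => x%:E).
Hypothesis hp0 : (0 < mu [set x : R | (0 < x)%R])%E.
Hypothesis hp1 : (mu [set x : R | (0 < x)%R] < 1)%E.
Local Open Scope ereal_scope.

Lemma EpE : \int[mu]_(x in Pos) x%:E = (fine (\int[mu]_(x in Pos) x%:E))%:E.
Proof.
rewrite fineK //; apply: integrable_fin_num; first exact: mPos.
exact: (integrableS measurableT mPos).
Qed.

Lemma EmE : \int[mu]_(x in Neg) (- x)%:E = (fine (\int[mu]_(x in Neg) (- x)%:E))%:E.
Proof.
rewrite fineK //; apply: integrable_fin_num; first exact: mNeg.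
apply: (integrableS measurableT mNeg) => //.
apply: (eq_integrable measurableT _ _ _ (integrableN hint)) => x _.
by rewrite /= EFinN.
Qed.

Lemma mpE : mu Pos = (fine (mu Pos))%:E.
Proof. by rewrite fineK // fin_num_measure //; exact: mPos. Qed.
Lemma mnE : mu Neg = (fine (mu Neg))%:E.
Proof. by rewrite fineK // fin_num_measure //; exact: mNeg. Qed.

Lemma mp_gt0 : (0 < fine (mu Pos))%R.
Proof. by rewrite -lte_fin -mpE. Qed.

Lemma mn_gt0 : (0 < fine (mu Neg))%R.
Proof.
have h : mu Neg = 1 - mu Pos by rewrite -mu_notPos // probability_setC //; exact: mPos.
have h1 : (fine (mu Pos) < 1)%R by rewrite -lte_fin -mpE.
by rewrite -lte_fin -mnE h mpE -EFinB lte_fin subr_gt0.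
Qed.

Lemma Up_ge0 : (0 <= Uplus mu)%R.
Proof.
rewrite /Uplus; apply: divr_ge0; apply: fine_ge0; last exact: measure_ge0.
by apply: integral_ge0 => x /= x0; rewrite lee_fin ltW.
Qed.

Lemma Um_ge0 : (0 <= Uminus mu)%R.
Proof.
rewrite /Uminus; apply: divr_ge0; apply: fine_ge0; last exact: measure_ge0.
by apply: integral_ge0 => x /= x0; rewrite lee_fin oppr_ge0 ltW.
Qed.

Lemma UpE : (Uplus mu * fine (mu Pos) = fine (\int[mu]_(x in Pos) x%:E))%R.
Proof. rewrite /Uplus divfK //; exact: lt0r_neq0 mp_gt0. Qed.
Lemma UmE : (Uminus mu * fine (mu Neg) = fine (\int[mu]_(x in Neg) (- x)%:E))%R.
Proof. rewrite /Uminus divfK //; exact: lt0r_neq0 mn_gt0. Qed.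

Definition hfun (v : n.-tuple R) : R :=
  \sum_(i < n) (Uplus mu * ip (tnth v i) - Uminus mu * im (tnth v i)).

Lemma welfare_eq F : SCF F -> BIC P mu X F ->
  P.-integrable setT (fun w => (F (profile X w) * hfun (profile X w))%:E) /\
  welfare P X F = \int[P]_w (F (profile X w) * hfun (profile X w))%:E.
Proof.
move=> HF HB.
have [fa Hfa] := choice (fun i => per_i hiid i HF HB n0).
have [fb Hfb] := choice Hfa.
have mFp : measurable_fun setT (fun w => F (profile X w)).
  exact: (measurableT_comp HF.1 (mprofile (mX hiid))).
have F0 w : (0 <= F (profile X w))%R by case/andP: (HF.2 (profile X w)).
pose u i w := (gp (X i w) * F (profile X w))%R.
pose v i w := (gm (X i w) * F (profile X w))%R.
pose u' i w := (Uplus mu * (ip (X i w) * F (profile X w)))%R.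
pose v' i w := (Uminus mu * (im (X i w) * F (profile X w)))%R.
have Iu i : \int[P]_w (u i w)%:E = (fa i * fine (\int[mu]_(x in Pos) x%:E))%:E.
  by have [_ [-> _ _ _]] := Hfb i; rewrite EpE EFinM.
have Iv i : \int[P]_w (v i w)%:E = (fb i * fine (\int[mu]_(x in Neg) (- x)%:E))%:E.
  by have [_ [_ _ -> _]] := Hfb i; rewrite EmE EFinM.
have Iu' i : \int[P]_w (u' i w)%:E = (Uplus mu * (fa i * fine (mu Pos)))%:E.
  have [_ [_ H _ _]] := Hfb i.
  rewrite (eq_integral (fun w => (Uplus mu)%:E * (ip (X i w) * F (profile X w))%:E)); last first.
    by move=> w _; rewrite EFinM.
  rewrite ge0_integralZl_EFin //; first by rewrite H mpE -!EFinM.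
  - by move=> w _; rewrite lee_fin mulr_ge0 // ip_ge0.
  - apply/measurable_EFinP; apply: measurable_funM => //.
    exact: (measurableT_comp m_ip (mX hiid i)).
  - exact: Up_ge0.
have Iv' i : \int[P]_w (v' i w)%:E = (Uminus mu * (fb i * fine (mu Neg)))%:E.
  have [_ [_ _ _ H]] := Hfb i.
  rewrite (eq_integral (fun w => (Uminus mu)%:E * (im (X i w) * F (profile X w))%:E)); last first.
    by move=> w _; rewrite EFinM.
  rewrite ge0_integralZl_EFin //; first by rewrite H mnE -!EFinM.
  - by move=> w _; rewrite lee_fin mulr_ge0 // im_ge0.
  - apply/measurable_EFinP; apply: measurable_funM => //.
    exact: (measurableT_comp m_im (mX hiid i)).
  - exact: Um_ge0.
have iu i : P.-integrable setT (EFin \o u i).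
  apply: (fin_integrable _ _ (Iu i)) => [|w].
    apply: measurable_funM => //; exact: (measurableT_comp m_gp (mX hiid i)).
  by rewrite mulr_ge0 // gp_ge0.
have iv i : P.-integrable setT (EFin \o v i).
  apply: (fin_integrable _ _ (Iv i)) => [|w].
    apply: measurable_funM => //; exact: (measurableT_comp m_gm (mX hiid i)).
  by rewrite mulr_ge0 // gm_ge0.
have iu' i : P.-integrable setT (EFin \o u' i).
  apply: (fin_integrable _ _ (Iu' i)) => [|w].
    apply: measurable_funM => //; apply: measurable_funM => //.
    exact: (measurableT_comp m_ip (mX hiid i)).
  by rewrite mulr_ge0 ?Up_ge0 // mulr_ge0 // ip_ge0.
have iv' i : P.-integrable setT (EFin \o v' i).
  apply: (fin_integrable _ _ (Iv' i)) => [|w].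
    apply: measurable_funM => //; apply: measurable_funM => //.
    exact: (measurableT_comp m_im (mX hiid i)).
  by rewrite mulr_ge0 ?Um_ge0 // mulr_ge0 // im_ge0.
have [intA eqA] := int_lin iu iv Iu Iv.
have [intB eqB] := int_lin iu' iv' Iu' Iv'.
have EB : (fun w => (F (profile X w) * hfun (profile X w))%:E) =
          (fun w => (\sum_(i < n) (u' i w - v' i w))%:E).
  apply/funext => w; congr (_%:E); rewrite /hfun mulr_sumr; apply: eq_bigr => i _.
  rewrite tnth_mktuple /u' /v'; ring.
rewrite EB; split => //.
rewrite eqB /welfare.
rewrite (eq_integral (fun w => (\sum_(i < n) (u i w - v i w))%:E)); last first.
  move=> w _; congr (_%:E); rewrite mulr_sumr; apply: eq_bigr => i _.
  by rewrite /u /v -mulrBl gpmE mulrC.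
rewrite eqA; congr (_%:E); apply: eq_bigr => i _.
rewrite -UpE -UmE; ring.
Qed.

Local Open Scope ring_scope.

Lemma hfunE v : hfun v = Uplus mu * (count (fun i : 'I_n => 0 < tnth v i) (enum 'I_n))%:R
   - Uminus mu * (n%:R - (count (fun i : 'I_n => 0 < tnth v i) (enum 'I_n))%:R).
Proof.
rewrite count_sumR /hfun sumrB -!mulr_sumr.
congr (_ - _ * _).
have -> : \sum_(i < n) im (tnth v i) = \sum_(i < n) (1 - ip (tnth v i)).
  by apply: eq_bigr => i _; rewrite imE ipE; case: ifP => _; rewrite ?subrr ?subr0.
by rewrite sumrB sumr_const card_ord.
Qed.

Lemma pointwise (F : n.-tuple R -> R) kbar v : 0 <= F v <= 1 -> is_kbar mu n kbar ->
  F v * hfun v <= @qmr R n kbar v * hfun v.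
Proof.
move=> /andP [F0 F1] [/andP [k1 kn] kc kmin].
set N := count (fun i : 'I_n => 0 < tnth v i) (enum 'I_n).
have Nn : (N <= n)%N by rewrite /N (leq_trans (count_size _ _)) // size_enum_ord.
have NnR : (N%:R <= n%:R :> R) by rewrite ler_nat.
rewrite hfunE /qmr -/N.
set Up := Uplus mu; set Um := Uminus mu.
have Up0 : 0 <= Up := Up_ge0.
have Um0 : 0 <= Um := Um_ge0.
have [S0|Spos] := eqVneq (Up + Um) 0.
  have Up00 : Up = 0 by lra.
  have Um00 : Um = 0 by lra.
  by rewrite Up00 Um00 !mul0r subr0 !mulr0.
have Sgt0 : 0 < Up + Um by rewrite lt_neqAle eq_sym Spos /=; lra.
have cS : Um / (Up + Um) * n%:R * (Up + Um) = Um * n%:R.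
  by field.
case: ifP => hk.
- have hN : Um / (Up + Um) * n%:R < N%:R.
    by apply: (lt_le_trans kc); rewrite ler_nat.
  have : Um / (Up + Um) * n%:R * (Up + Um) < N%:R * (Up + Um) by rewrite ltr_pM2r.
  rewrite cS => h.
  have hpos : 0 <= Up * N%:R - Um * (n%:R - N%:R) by lra.
  rewrite mul1r; nra.
- have hneg : Up * N%:R - Um * (n%:R - N%:R) <= 0.
    have [N0|Npos] := eqVneq N 0%N.
      have n0R : (0 <= n%:R :> R) by rewrite ler0n.
      rewrite N0 mulr0 sub0r subr0; nra.
    have hN : N%:R <= Um / (Up + Um) * n%:R.
      rewrite leNgt; apply/negP => h.
      have := kmin N; rewrite lt0n Npos Nn /= => /(_ isT h).
      by rewrite hk.
    have : N%:R * (Up + Um) <= Um / (Up + Um) * n%:R * (Up + Um) by rewrite ler_pM2r.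
    rewrite cS => h; lra.
  rewrite mul0r; nra.
Qed.

End Final.
Unset Implicit Arguments.
Set Strict Implicit.
Set Printing Implicit Defensive.
Theorem proposition1 (R : realType) (d : measure_display) (Omega : measurableType d)
    (P : probability Omega R) (mu : probability R R) (n : nat)
    (X : 'I_n -> Omega -> R) (kbar : nat) :
  (2 <= n)%N ->
  iid P mu X ->
  ~ (law_support mu 0) ->
  mu.-integrable setT (fun x => x%:E) ->
  (0 < mu [set x : R | (0 < x)%R])%E -> (mu [set x : R | (0 < x)%R] < 1)%E ->
  is_kbar mu n kbar ->
  [/\ SCF (@qmr R n kbar), anonymous mu (@qmr R n kbar),
      BIC P mu X (@qmr R n kbar), ordinal_scf mu (@qmr R n kbar)
    & forall f : n.-tuple R -> R, SCF f -> anonymous mu f -> BIC P mu X f ->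
        (welfare P X f <= welfare P X (@qmr R n kbar))%E].
Proof.
move=> n2 hiid n0 hint hp0 hp1 hk.
split.
- exact: SCF_qmr.
- exact: anon_qmr.
- exact: BIC_qmr hiid.
- exact: ord_qmr.
- move=> f HF _ HB.
  have [i1 e1] := welfare_eq hiid n0 hint hp0 hp1 HF HB.
  have [i2 e2] := welfare_eq hiid n0 hint hp0 hp1 (SCF_qmr n kbar) (BIC_qmr kbar hiid).
  rewrite e1 e2; apply: le_integral => // w _; rewrite lee_fin; apply: pointwise => //; exact: HF.2.
Qed.
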